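(* Let $n\ge 4$ and let $R(F_n^1)$ be the complex Leibniz algebra with basis $\{h_1,h_2,e_1,\dots,e_n\}$ and nonzero products $[e_i,e_1]=e_{i+1}$ ($2\le i\le n-1$), $[e_1,h_2]=e_1$, $[h_2,e_1]=-e_1$, $[e_i,h_1]=e_i$ ($2\le i\le n$), $[e_i,h_2]=(i-1)e_i$ ($2\le i\le n$). Then $(d,D)$ is a biderivation iff there exist $\alpha_1,\alpha_2,\alpha_3,\beta_3,\dots,\beta_{n+1}\in\mathbb C$ such that, with $e_{n+1}=0$, $$d(h_1)=0,\quad d(h_2)=-\alpha_2e_1,\quad d(e_1)=\alpha_3e_1,\quad d(e_i)=(\alpha_1+(i-1)\alpha_3)e_i+\alpha_2e_{i+1}\ (2\le i\le n),$$ $$D(h_1)=\sum_{i=2}^n\beta_{i+1}e_i,\quad D(h_2)=-\alpha_2e_1+\sum_{i=2}^n(i-1)\beta_{i+1}e_i,\quad D(e_1)=\alpha_3e_1+\sum_{i=3}^n\beta_ie_i,\quad D(e_i)=0\ (2\le i\le n).$$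
   Context: Leibniz algebras are right Leibniz over $\mathbb C$: $[x,[y,z]]=[[x,y],z]-[[x,z],y]$. Unlisted products are zero. A derivation is a linear $d$ with $d([x,y])=[d(x),y]+[x,d(y)]$; an anti-derivation is a linear $D$ with $D([x,y])=[D(x),y]-[D(y),x]$; a biderivation is a pair $(d,D)$ of a derivation and an anti-derivation with $[x,d(y)]=[x,D(y)]$ for all $x,y$. *)

(* Defs.v *)
(* The ground field C is  R[i]  (complex numbers over a
   real closed field, from mathcomp-real-closed) for an arbitrary
   R : realType, i.e. C is (isomorphic to) the field of complex numbers. *)
From HB Require Import structures.
From mathcomp Require Import all_boot all_order all_algebra.
From mathcomp Require Import reals complex.
Set Implicit Arguments. Unset Strict Implicit. Unset Printing Implicit Defensive.
Import Order.TTheory GRing.Theory Num.Theory.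
Local Open Scope ring_scope.
Local Open Scope complex_scope.

Section RFn1.
Variable R : realType.
Local Notation C := R[i].
Variable n : nat.

(* Vectors of R(F_n^1) are row vectors of length n+2 with respect to the
   ordered basis (h1, h2, e1, ..., en): index 0 = h1, index 1 = h2,
   index k+1 = e_k (1 <= k <= n). *)
Definition V := 'rV[C]_(n.+2).

Definition bvec (k : nat) : V := \row_(j < n.+2) (if j == k :> nat then 1 else 0).

Definition h1 : V := bvec 0.
Definition h2 : V := bvec 1.
(* e k for 1 <= k <= n; e k = 0 otherwise (in particular e (n+1) = 0). *)
Definition e (k : nat) : V := if (1 <= k <= n)%N then bvec k.+1 else 0.

Definition brb (i j : nat) : V :=
  if (i == 1%N) && (j == 2%N) then - e 1            (* [h2,e1] = -e1 *)
  else if (i == 2%N) && (j == 1%N) then e 1         (* [e1,h2] = e1 *)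
  else if (3 <= i)%N then
    (* b_i = e_a with a = i - 1 >= 2 *)
    if j == 2%N then e i                            (* [e_a,e1] = e_{a+1} *)
    else if j == 0%N then e i.-1                    (* [e_a,h1] = e_a *)
    else if j == 1%N then (i.-2)%:R *: e i.-1       (* [e_a,h2] = (a-1) e_a *)
    else 0
  else 0.

Definition bracket (x y : V) : V :=
  \sum_(i < n.+2) \sum_(j < n.+2) (x 0 i * y 0 j) *: brb i j.

Definition app (A : 'M[C]_(n.+2)) (x : V) : V := x *m A.

Definition is_derivation (d : 'M[C]_(n.+2)) : Prop :=
  forall x y, app d (bracket x y) = bracket (app d x) y + bracket x (app d y).

Definition is_antiderivation (D : 'M[C]_(n.+2)) : Prop :=
  forall x y, app D (bracket x y) = bracket (app D x) y - bracket (app D y) x.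

Definition is_biderivation (d D : 'M[C]_(n.+2)) : Prop :=
  [/\ is_derivation d, is_antiderivation D &
      forall x y, bracket x (app d y) = bracket x (app D y)].

End RFn1.

(* Main.v *)
Require Import Defs.
From HB Require Import structures.
From mathcomp Require Import all_boot all_order all_algebra.
From mathcomp Require Import reals complex.
From mathcomp Require Import ring lra zify.
Set Implicit Arguments. Unset Strict Implicit. Unset Printing Implicit Defensive.
Import Order.TTheory GRing.Theory Num.Theory.
Local Open Scope ring_scope.
Local Open Scope complex_scope.

Section Aux.
Variable R : realType.
Variable m : nat.
Local Notation C := R[i].
Local Notation n := m.+4.
Local Notation N := m.+4.+2.
Local Notation VV := (V R n).
Local Notation bv := (bvec R n).
Local Notation ee := (e R n).
Local Notation brk := (@bracket R n).
Local Notation brbb := (brb R n).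

Definition cf (x : VV) (t : nat) : C := if (t < N)%N then x ord0 (inord t) else 0.

Lemma cf_ord (x : VV) (i : 'I_N) : cf x i = x ord0 i.
Proof. by rewrite /cf ltn_ord inord_val. Qed.

Lemma cf_eq (x y : VV) : (forall t, (t < N)%N -> cf x t = cf y t) -> x = y.
Proof.
move=> H; apply/rowP => j; have := H j (ltn_ord j); rewrite !cf_ord.
by have -> : (0 : 'I_1) = ord0 by apply/val_inj.
Qed.

Lemma cfD x y t : cf (x + y) t = cf x t + cf y t.
Proof. by rewrite /cf; case: ifP; rewrite ?mxE ?addr0. Qed.
Lemma cfN x t : cf (- x) t = - cf x t.
Proof. by rewrite /cf; case: ifP; rewrite ?mxE ?oppr0. Qed.
Lemma cfB x y t : cf (x - y) t = cf x t - cf y t.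
Proof. by rewrite cfD cfN. Qed.
Lemma cfZ a x t : cf (a *: x) t = a * cf x t.
Proof. by rewrite /cf; case: ifP; rewrite ?mxE ?mulr0. Qed.
Lemma cf0 t : cf 0 t = 0.
Proof. by rewrite /cf; case: ifP; rewrite ?mxE. Qed.
Lemma cf_sum (I : Type) (r : seq I) (P : pred I) (F : I -> VV) t :
  cf (\sum_(i <- r | P i) F i) t = \sum_(i <- r | P i) cf (F i) t.
Proof.
apply: (big_morph (fun x => cf x t)); [move=> u v; exact: cfD| exact: cf0].
Qed.

Definition bvf (j : nat) (s : nat) : C := (s == j)%:R.

Lemma cf_bvec k t : (t < N)%N -> cf (bv k) t = bvf k t.
Proof. by move=> Ht; rewrite /cf Ht /bvec mxE inordK // /bvf; case: eqP. Qed.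

Lemma bvec_out k : (N <= k)%N -> bv k = 0.
Proof.
move=> Hk; apply/rowP => j; rewrite /bvec !mxE; case: eqP => // Hj.
by move: (ltn_ord j); rewrite Hj; lia.
Qed.

Lemma e_bvec k : (0 < k)%N -> ee k = bv k.+1.
Proof.
move=> Hk; rewrite /e; case: ifP => // H.
by rewrite bvec_out //; lia.
Qed.

Lemma brb_j3 i j : brbb i j.+3 = 0.
Proof.
rewrite /brb /= (_ : (j.+3 == 2%N) = false) // (_ : (j.+3 == 1%N) = false) //.
by rewrite !andbF; case: ifP.
Qed.

Lemma appD (A : 'M[C]_N) x y : app A (x + y) = app A x + app A y.
Proof. by rewrite /app mulmxDl. Qed.
Lemma appZ (A : 'M[C]_N) a x : app A (a *: x) = a *: app A x.
Proof. by rewrite /app scalemxAl. Qed.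
Lemma app0 (A : 'M[C]_N) : app A 0 = 0.
Proof. by rewrite /app mul0mx. Qed.
Lemma appN (A : 'M[C]_N) x : app A (- x) = - app A x.
Proof. by rewrite /app mulNmx. Qed.

Lemma bracketDl x1 x2 y : brk (x1 + x2) y = brk x1 y + brk x2 y.
Proof.
rewrite /bracket -big_split; apply: eq_bigr => i _.
rewrite -big_split; apply: eq_bigr => j _.
by rewrite mxE mulrDl scalerDl.
Qed.
Lemma bracketZl a x y : brk (a *: x) y = a *: brk x y.
Proof.
rewrite /bracket scaler_sumr; apply: eq_bigr => i _.
rewrite scaler_sumr; apply: eq_bigr => j _.
by rewrite mxE scalerA mulrA.
Qed.
Lemma bracketDr x y1 y2 : brk x (y1 + y2) = brk x y1 + brk x y2.
Proof.
rewrite /bracket -big_split; apply: eq_bigr => i _.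
rewrite -big_split; apply: eq_bigr => j _.
by rewrite mxE mulrDr scalerDl.
Qed.
Lemma bracketZr a x y : brk x (a *: y) = a *: brk x y.
Proof.
rewrite /bracket scaler_sumr; apply: eq_bigr => i _.
rewrite scaler_sumr; apply: eq_bigr => j _.
by rewrite mxE scalerA mulrCA.
Qed.

Lemma row_expand (x : VV) : x = \sum_(i < N) x ord0 i *: bv i.
Proof.
apply/rowP => j; rewrite summxE (bigD1 j) //= big1 => [|i Hij].
  rewrite !mxE eqxx mulr1 addr0.
  by have -> : (0 : 'I_1) = ord0 by apply/val_inj.
rewrite !mxE; case: eqP => [/val_inj E|]; last by rewrite mulr0.
by move: Hij; rewrite E eqxx.
Qed.

Lemma bilin_zero (Phi : VV -> VV -> VV) :
  (forall x1 x2 y, Phi (x1 + x2) y = Phi x1 y + Phi x2 y) ->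
  (forall a x y, Phi (a *: x) y = a *: Phi x y) ->
  (forall x y1 y2, Phi x (y1 + y2) = Phi x y1 + Phi x y2) ->
  (forall a x y, Phi x (a *: y) = a *: Phi x y) ->
  (forall i j : 'I_N, Phi (bv i) (bv j) = 0) -> forall x y, Phi x y = 0.
Proof.
move=> Dl Zl Dr Zr H x y.
have P0l : forall y, Phi 0 y = 0.
  move=> y'; have -> : (0 : VV) = (0 : C) *: (0 : VV) by rewrite scale0r.
  by rewrite Zl !scale0r.
have P0r : forall x, Phi x 0 = 0.
  move=> x'; have -> : (0 : VV) = (0 : C) *: (0 : VV) by rewrite scale0r.
  by rewrite Zr !scale0r.
rewrite (row_expand x); elim/big_ind: _ => [|u v Hu Hv|i _]; first exact: P0l.
  by rewrite Dl Hu Hv addr0.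
rewrite Zl (row_expand y); elim/big_ind: _ => [|u v Hu Hv|j _].
- by rewrite P0r scaler0.
- by rewrite Dr scalerDr Hu Hv addr0.
by rewrite Zr H !scaler0.
Qed.


Lemma E0 : (0 : 'I_1) = ord0. Proof. by apply/val_inj. Qed.

Lemma bracket_nat x y : brk x y =
  \sum_(0 <= i < N) \sum_(0 <= j < N) (cf x i * cf y j) *: brbb i j.
Proof.
rewrite /bracket big_mkord; apply: eq_bigr => i _.
by rewrite big_mkord; apply: eq_bigr => j _; rewrite !cf_ord E0.
Qed.

Lemma collapse (T : zmodType) a b p (G : nat -> T) :
  (forall i, (a <= i < b)%N -> i != p -> G i = 0) ->
  \sum_(a <= i < b) G i = if (a <= p < b)%N then G p else 0.
Proof.
move=> H; case: ifP => Hp.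
  rewrite (bigD1_seq p) ?mem_index_iota //=; last by rewrite /index_iota iota_uniq.
  rewrite big1_seq ?addr0 // => i /andP[Hip]; rewrite mem_index_iota => Hi.
  exact: H.
rewrite big1_seq // => i /andP[_]; rewrite mem_index_iota => Hi; apply: H => //.
by apply/eqP => E; rewrite -E Hi in Hp.
Qed.

Lemma bracket_bvec i j : (i < N)%N -> (j < N)%N -> brk (bv i) (bv j) = brbb i j.
Proof.
move=> Hi Hj; rewrite bracket_nat (collapse (p:=i)) => [|k /andP[_ Hk] Hki].
  rewrite Hi (collapse (p:=j)) => [|l /andP[_ Hl] Hlj].
    by rewrite Hj !cf_bvec // /bvf !eqxx mulr1 scale1r.
  by rewrite !cf_bvec // /bvf (negPf Hlj) mulr0 scale0r.
by rewrite big_nat_cond big1 // => l /andP[/andP[_ Hl] _]; rewrite !cf_bvec // /bvf (negPf Hki) mul0r scale0r.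
Qed.

Definition BR (x y : nat -> C) (t : nat) : C :=
  match t with
  | 0%N | 1%N => 0
  | 2%N => x 2%N * y 1%N - x 1%N * y 2%N
  | 3%N => x 3%N * (y 0%N + y 1%N)
  | s.+4 => x s.+4 * (y 0%N + s.+2%:R * y 1%N) + x s.+3 * y 2%N
  end.

Lemma sum3 (T : zmodType) (F : nat -> T) : (forall j, F j.+3 = 0) ->
  \sum_(0 <= j < N) F j = F 0%N + F 1%N + F 2%N.
Proof.
move=> H; rewrite big_ltn // big_ltn // big_ltn // big_nat_cond big1 ?addr0 ?addrA //.
by move=> j /andP[/andP[Hj _] _]; case: j Hj => [|[|[|j]]] // _; rewrite H.
Qed.

Lemma sum3r (T : zmodType) (F : nat -> T) :
  \sum_(0 <= j < N) F j = F 0%N + F 1%N + F 2%N + \sum_(3 <= j < N) F j.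
Proof. by rewrite big_ltn // big_ltn // big_ltn // !addrA. Qed.

Lemma brb_big i : (3 <= i)%N -> (i < N)%N ->
  [/\ brbb i 0 = bv i, brbb i 1 = (i.-2)%:R *: bv i & brbb i 2 = bv i.+1].
Proof.
case: i => [|[|[|a]]] // _ Ha.
by rewrite /brb /= !e_bvec.
Qed.

Lemma master x y t : (t < N)%N -> cf (brk x y) t = BR (cf x) (cf y) t.
Proof.
move=> Ht; rewrite bracket_nat cf_sum.
under eq_bigr do rewrite cf_sum.
have inner : forall i, \sum_(0 <= j < N) cf ((cf x i * cf y j) *: brbb i j) t =
   cf x i * (cf y 0%N * cf (brbb i 0) t + cf y 1%N * cf (brbb i 1) t + cf y 2%N * cf (brbb i 2) t).
  move=> i; rewrite sum3 => [|j]; last by rewrite brb_j3 scaler0 cf0.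
  by rewrite !cfZ; ring.
rewrite (eq_bigr _ (fun i _ => inner i)) sum3r.
rewrite (eq_big_nat _ _ (F2 := fun i => 
   cf x i * cf y 0%N * bvf i t + cf x i * cf y 1%N * ((i.-2)%:R * bvf i t)
   + cf x i * cf y 2%N * bvf i.+1 t)); last first.
  move=> i /andP[Hi3 HiN]; have [-> -> ->] := brb_big Hi3 HiN.
  rewrite cfZ !cf_bvec //; ring.
rewrite !big_split /=.
rewrite (collapse (p := t)) => [|i _ Hi]; last by rewrite /bvf eq_sym (negPf Hi) !mulr0.
rewrite (collapse (p := t)) => [|i _ Hi]; last by rewrite /bvf eq_sym (negPf Hi) !mulr0.
rewrite (collapse (p := t.-1)) => [|i _ Hi]; last first.
  rewrite /bvf; case: eqP => [E|]; last by rewrite mulr0.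
  by move: Hi; rewrite E /= eqxx.
rewrite Ht.
have b0 : forall j, brbb 0 j = 0 by [].
rewrite !b0 (_ : brbb 1 0 = 0) // (_ : brbb 1 1 = 0) // (_ : brbb 1 2 = - ee 1) //.
rewrite (_ : brbb 2 0 = 0) // (_ : brbb 2 1 = ee 1) // (_ : brbb 2 2 = 0) //.
rewrite !cf0 cfN e_bvec // cf_bvec //.
clear inner; case: t Ht => [|[|[|[|s]]]] Ht /=; rewrite /bvf /=.
all: rewrite ?eqxx ?(ltnW Ht) /=; ring.
Qed.

Definition LB (f : nat -> nat -> C) (i j t : nat) : C :=
  match j with
  | 0%N => match i with a.+3 => f a.+3 t | _ => 0 end
  | 1%N => match i with 2%N => f 2%N t | a.+3 => a.+1%:R * f a.+3 t | _ => 0 end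
  | 2%N => match i with 1%N => - f 2%N t | a.+3 => f a.+4 t | _ => 0 end
  | _ => 0
  end.

Definition Uf (A : 'M[C]_N) (i t : nat) : C := cf (app A (bv i)) t.

Lemma LB_ok (A : 'M[C]_N) i j t : (i < N)%N -> (j < N)%N ->
  cf (app A (brbb i j)) t = LB (Uf A) i j t.
Proof.
move=> Hi Hj; case: j Hj => [|[|[|c]]] Hj; last by rewrite brb_j3 app0 cf0.
all: case: i Hi => [|[|[|a]]] Hi; try by rewrite /brb /= ?e_bvec ?app0 ?appN ?cf0 ?cfN.
all: have [F0 F1 F2] := brb_big (isT : (3 <= a.+3)%N) Hi.
all: by rewrite /= ?F0 ?F1 ?F2 ?appZ ?cfZ.
Qed.

Lemma BR_ext x x' y y' t : (forall s, (s < N)%N -> x s = x' s) ->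
  (forall s, (s < N)%N -> y s = y' s) -> (t < N)%N -> BR x y t = BR x' y' t.
Proof.
move=> Hx Hy Ht; case: t Ht => [|[|[|[|s]]]] Ht //=; rewrite !Hy //.
- by rewrite !Hx.
- by rewrite !Hx.
- by rewrite !Hx // ltnW.
Qed.

Lemma BR_bvl i y t : (t < N)%N -> BR (cf (bv i)) y t = BR (bvf i) y t.
Proof. by move=> Ht; apply: BR_ext => // s Hs; rewrite cf_bvec. Qed.
Lemma BR_bvr x j t : (t < N)%N -> BR x (cf (bv j)) t = BR x (bvf j) t.
Proof. by move=> Ht; apply: BR_ext => // s Hs; rewrite cf_bvec. Qed.

Lemma zmod_der (T : zmodType) (a1 a2 b1 b2 c1 c2 : T) :
  (a1 + a2) - ((b1 + b2) + (c1 + c2)) = (a1 - (b1 + c1)) + (a2 - (b2 + c2)).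
Proof. rewrite [(b1 + b2) + _]addrACA. rewrite opprD addrACA. done. Qed.
Lemma zmod_anti (T : zmodType) (a1 a2 b1 b2 c1 c2 : T) :
  (a1 + a2) - ((b1 + b2) - (c1 + c2)) = (a1 - (b1 - c1)) + (a2 - (b2 - c2)).
Proof. rewrite [- (c1 + c2)]opprD [(b1 + b2) + _]addrACA opprD addrACA. done. Qed.
Lemma zmod_th (T : zmodType) (a1 a2 b1 b2 : T) :
  (a1 + a2) - (b1 + b2) = (a1 - b1) + (a2 - b2).
Proof. by rewrite opprD addrACA. Qed.

Definition DerS (f : nat -> nat -> C) := forall i j t, (i < N)%N -> (j < N)%N -> (t < N)%N ->
  LB f i j t = BR (f i) (bvf j) t + BR (bvf i) (f j) t.
Definition AntiS (f : nat -> nat -> C) := forall i j t, (i < N)%N -> (j < N)%N -> (t < N)%N ->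
  LB f i j t = BR (f i) (bvf j) t - BR (f j) (bvf i) t.
Definition ThS (f g : nat -> nat -> C) := forall i j t, (i < N)%N -> (j < N)%N -> (t < N)%N ->
  BR (bvf i) (f j) t = BR (bvf i) (g j) t.

Lemma derP (d : 'M[C]_N) : is_derivation d <-> DerS (Uf d).
Proof.
split.
  move=> H i j t Hi Hj Ht; have := congr1 (cf^~ t) (H (bv i) (bv j)).
  by rewrite bracket_bvec // LB_ok // cfD !master // BR_bvl // BR_bvr.
move=> H x y; apply/eqP; rewrite -subr_eq0; apply/eqP; move: x y.
apply: (bilin_zero (Phi := fun x y => app d (brk x y) - (brk (app d x) y + brk x (app d y)))).
- by move=> x1 x2 y; rewrite /= !bracketDl !appD !bracketDl zmod_der.
- by move=> a x y; rewrite /= !bracketZl !appZ ?bracketZl ?bracketZr scalerBr scalerDr.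
- by move=> x y1 y2; rewrite /= !bracketDr !appD !bracketDr zmod_der.
- by move=> a x y; rewrite /= !bracketZr !appZ !bracketZr ?bracketZl scalerBr scalerDr.
move=> i j /=; apply: cf_eq => t Ht.
by rewrite cfB cfD cf0 bracket_bvec // LB_ok // !master // BR_bvl // BR_bvr // H // subrr.
Qed.

Lemma antiP (D : 'M[C]_N) : is_antiderivation D <-> AntiS (Uf D).
Proof.
split.
  move=> H i j t Hi Hj Ht; have := congr1 (cf^~ t) (H (bv i) (bv j)).
  by rewrite bracket_bvec // LB_ok // cfB !master // !BR_bvr.
move=> H x y; apply/eqP; rewrite -subr_eq0; apply/eqP; move: x y.
apply: (bilin_zero (Phi := fun x y => app D (brk x y) - (brk (app D x) y - brk (app D y) x))).
- by move=> x1 x2 y; rewrite /= !bracketDl !appD ?bracketDl ?bracketDr zmod_anti.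
- by move=> a x y; rewrite /= !bracketZl !appZ ?bracketZl ?bracketZr scalerBr scalerBr.
- by move=> x y1 y2; rewrite /= !bracketDr !appD ?bracketDr ?bracketDl zmod_anti.
- by move=> a x y; rewrite /= !bracketZr !appZ ?bracketZr ?bracketZl scalerBr scalerBr.
move=> i j /=; apply: cf_eq => t Ht.
by rewrite cfB cfB cf0 bracket_bvec // LB_ok // !master // !BR_bvr // H // subrr.
Qed.

Lemma thP (d D : 'M[C]_N) : (forall x y, brk x (app d y) = brk x (app D y)) <-> ThS (Uf d) (Uf D).
Proof.
split.
  move=> H i j t Hi Hj Ht; have := congr1 (cf^~ t) (H (bv i) (bv j)).
  by rewrite !master // !BR_bvl.
move=> H x y; apply/eqP; rewrite -subr_eq0; apply/eqP; move: x y.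
apply: (bilin_zero (Phi := fun x y => brk x (app d y) - brk x (app D y))).
- by move=> x1 x2 y; rewrite /= !bracketDl zmod_th.
- by move=> a x y; rewrite /= !bracketZl scalerBr.
- by move=> x y1 y2; rewrite /= !appD !bracketDr zmod_th.
- by move=> a x y; rewrite /= !appZ !bracketZr scalerBr.
move=> i j /=; apply: cf_eq => t Ht.
by rewrite cfB cf0 !master // !BR_bvl // H // subrr.
Qed.

End Aux.



Lemma eqS0 k : (k.+1 == 0)%N = false. Proof. by []. Qed.
Lemma eq0S k : (0 == k.+1)%N = false. Proof. by []. Qed.
Lemma eqSn k : (k.+1 == k)%N = false. Proof. by apply/eqP; lia. Qed.
Lemma eqnS k : (k == k.+1)%N = false. Proof. by apply/eqP; lia. Qed.

Ltac simpH H := rewrite /LB /BR /bvf /= ?eqxx ?eqSS ?eqS0 ?eq0S ?eqSn ?eqnS ?eqxx /= in H.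

Lemma from_eq (T : zmodType) (x y l r : T) : l = r -> x - y = l - r -> x = y.
Proof. by move=> ->; rewrite subrr => /eqP; rewrite subr_eq0 => /eqP. Qed.
Lemma from_eqN (T : zmodType) (x y l r : T) : l = r -> x - y = r - l -> x = y.
Proof. by move=> ->; rewrite subrr => /eqP; rewrite subr_eq0 => /eqP. Qed.
Lemma from_eq2 (T : zmodType) (x y l1 r1 l2 r2 : T) : l1 = r1 -> l2 = r2 ->
  x - y = (l1 - r1) - (l2 - r2) -> x = y.
Proof. by move=> -> ->; rewrite !subrr => /eqP; rewrite subr_eq0 => /eqP. Qed.

Ltac solve1 H := rewrite /=; first [ apply: (from_eq H); ring | apply: (from_eqN H); ring ].
Ltac solve2 H1 H2 := first [ apply: (from_eq2 H1 H2); ring | apply: (from_eq2 H2 H1); ring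
   | apply: (from_eq2 (esym H1) H2); ring | apply: (from_eq2 H1 (esym H2)); ring ].

Section S2.
Variable R : realType.
Variable m : nat.
Local Notation C := R[i].
Local Notation N := m.+4.+2.
Local Notation DerS := (@DerS R m).
Local Notation AntiS := (@AntiS R m).
Local Notation ThS := (@ThS R m).

Lemma natdiff (p q : nat) : p != q -> (p%:R - q%:R : C) != 0.
Proof. by rewrite subr_eq0 eqr_nat. Qed.

Lemma cancel_nat (p q : nat) (x : C) : p != q -> p%:R * x = q%:R * x -> x = 0.
Proof.
move=> Hpq E; apply/eqP; move: (natdiff Hpq) => Hd.
have : (p%:R - q%:R) * x = 0 by rewrite mulrBl E subrr.
by move/eqP; rewrite mulf_eq0 (negPf Hd).
Qed.

Definition dco (a1 a2 a3 : C) (i t : nat) : C :=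
  match i, t with
  | 1%N, 2%N => - a2
  | 2%N, 2%N => a3
  | a.+3, _ => if t == a.+3 then a1 + a.+1%:R * a3 else if t == a.+4 then a2 else 0
  | _, _ => 0
  end.

Definition Dco (a2 a3 : C) (b : nat -> C) (i t : nat) : C :=
  match i, t with
  | 0%N, s.+3 => b s.+3
  | 1%N, 2%N => - a2
  | 1%N, s.+3 => s.+1%:R * b s.+3
  | 2%N, 2%N => a3
  | 2%N, s.+4 => b s.+3
  | _, _ => 0
  end.

Lemma forwardU (U : nat -> nat -> C) : DerS U ->
  [/\ forall t, (t < N)%N -> U 0%N t = 0,
      forall t, (t < N)%N -> t != 2%N -> U 1%N t = 0,
      forall t, (t < N)%N -> t != 2%N -> U 2%N t = 0 &
      forall a t, (a.+3 < N)%N -> (t < N)%N ->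
        U a.+3 t = dco (U 3%N 3%N - U 2%N 2%N) (- U 1%N 2%N) (U 2%N 2%N) a.+3 t].
Proof.
move=> Hd.
have U0hi : forall s, (s.+3 < N)%N -> U 0%N s.+3 = 0.
  case=> [_|s Hs].
    have H := Hd 0 0 3 isT isT isT; simpH H; solve1 H.
  have H := Hd 0 0 s.+4 isT isT Hs; simpH H; solve1 H.
have E1 := Hd 3 0 3 isT isT isT; simpH E1.
have E2 := Hd 3 0 4 isT isT isT; simpH E2.
have E3 := Hd 4 0 4 isT isT isT; simpH E3.
have U02 : U 0%N 2%N = 0 by solve1 E2.
have U01 : U 0%N 1%N = 0 by solve2 E1 E3.
have U00 : U 0%N 0%N = 0 by rewrite U01 in E1; solve1 E1.
have U0 : forall t, (t < N)%N -> U 0%N t = 0.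
  by case=> [|[|[|s]]] // Hs; apply: U0hi.
have U1hi : forall s, (s.+3 < N)%N -> U 1%N s.+3 = 0.
  case=> [_|s Hs].
    have H := Hd 1 0 3 isT isT isT; simpH H; rewrite ?U00 ?U01 ?U02 in H; solve1 H.
  have H := Hd 1 0 s.+4 isT isT Hs; simpH H; rewrite ?U0 // in H; solve1 H.
have U2hi : forall s, (s.+3 < N)%N -> U 2%N s.+3 = 0.
  case=> [_|s Hs].
    have H := Hd 2 0 3 isT isT isT; simpH H; rewrite ?U00 ?U01 ?U02 in H; solve1 H.
  have H := Hd 2 0 s.+4 isT isT Hs; simpH H; rewrite ?U0 // in H; solve1 H.
have F1 := Hd 1 2 2 isT isT isT; simpH F1.
have U11 : U 1%N 1%N = 0 by solve1 F1.
have F2 := Hd 3 1 3 isT isT isT; simpH F2.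
have U10 : U 1%N 0%N = 0 by rewrite U11 in F2; solve1 F2.
have F3 := Hd 1 2 0 isT isT isT; simpH F3.
have U20 : U 2%N 0%N = 0 by solve1 F3.
have F4 := Hd 1 2 1 isT isT isT; simpH F4.
have U21 : U 2%N 1%N = 0 by solve1 F4.
have Ulow : forall a t, (a.+3 < N)%N -> (t <= 2)%N -> U a.+3 t = 0.
  move=> a t Ha; case: t => [|[|[|]]] // _.
  - have H := Hd a.+3 0 0 Ha isT isT; simpH H; solve1 H.
  - have H := Hd a.+3 0 1 Ha isT isT; simpH H; solve1 H.
  - have H := Hd a.+3 0 2 Ha isT isT; simpH H; rewrite ?U01 ?U02 in H; solve1 H.
have diag : forall a, (a.+3 < N)%N -> U a.+3 a.+3 = (U 3%N 3%N - U 2%N 2%N) + a.+1%:R * U 2%N 2%N.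
  elim=> [_|a IH Ha]; first ring.
  have H := Hd a.+3 2 a.+4 (ltnW Ha) isT Ha; simpH H.
  rewrite IH in H; last exact: ltnW.
  solve1 H.
split => //.
- move=> t Ht H2; case: t Ht H2 => [|[|[|s]]] Ht H2; [exact: U10 | exact: U11 | by rewrite eqxx in H2 | exact: U1hi].
- move=> t Ht H2; case: t Ht H2 => [|[|[|s]]] Ht H2; [exact: U20 | exact: U21 | by rewrite eqxx in H2 | exact: U2hi].
move=> a t Ha Ht; case: t Ht => [|[|[|[|s]]]] Ht.
- by rewrite Ulow.
- by rewrite Ulow.
- by rewrite Ulow.
- have H := Hd a.+3 1 3 Ha isT isT; simpH H; rewrite U10 U11 in H.
  case: a Ha H => [|a] Ha H; first by rewrite /dco ?eqxx /=; ring.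
  rewrite /dco !eqSS !eq0S.
  apply: (@cancel_nat a.+2 1) => //; solve1 H.
- have H := Hd a.+3 1 s.+4 Ha isT Ht; simpH H; rewrite U10 U11 in H.
  move: H; rewrite /dco !eqSS; case: (eqVneq s.+1 a) => [<-|N1].
    rewrite ?eqxx diag //; ring.
  case: (eqVneq s a) => [<-|N2] /= H.
    solve1 H.
  apply: (@cancel_nat a.+1 s.+2).
    by apply/eqP => E; move/eqP: N1; lia.
  solve1 H.
Qed.

Lemma forwardW (U W : nat -> nat -> C) : DerS U -> AntiS W -> ThS U W ->
  forall i t, (i < N)%N -> (t < N)%N -> W i t = Dco (- U 1%N 2%N) (U 2%N 2%N) (W 0%N) i t.
Proof.
move=> Hd Ha Ht; have [U0 U1 U2 Ua] := forwardU Hd.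
have low : forall j t, (j < N)%N -> (t <= 2)%N -> W j t = U j t.
  move=> j t Hj Ht3.
  have T1 := Ht 3 j 3 isT Hj isT; simpH T1.
  have T2 := Ht 3 j 4 isT Hj isT; simpH T2.
  have T3 := Ht 4 j 4 isT Hj isT; simpH T3.
  have W1 : W j 1%N = U j 1%N by solve2 T1 T3.
  case: t Ht3 => [|[|[|]]] // _.
  - rewrite W1 in T1; solve1 T1.
  - solve1 T2.
have Walo : forall a s, (a.+3 < N)%N -> (s.+4 < N)%N -> W a.+3 s.+3 = 0.
  move=> a s Hai Hs; have H := Ha 2 a.+3 s.+4 isT Hai Hs; simpH H; solve1 H.
move=> i t Hi Htt.
case: i Hi => [|[|[|a]]] Hi.
- case: t Htt => [|[|[|s]]] Htt //; by rewrite low // U0.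
- case: t Htt => [|[|[|[|s]]]] Htt.
  + by rewrite low // U1.
  + by rewrite low // U1.
  + by rewrite low //= opprK.
  + have H := Ha 0 1 3 isT isT isT; simpH H; solve1 H.
  + have H := Ha 0 1 s.+4 isT isT Htt; simpH H; solve1 H.
- case: t Htt => [|[|[|[|s]]]] Htt.
  + by rewrite low // U2.
  + by rewrite low // U2.
  + by rewrite low.
  + have H := Ha 0 2 3 isT isT isT; simpH H; solve1 H.
  + have H := Ha 0 2 s.+4 isT isT Htt; simpH H; solve1 H.
case: t Htt => [|[|[|s]]] Htt.
- by rewrite low // Ua.
- by rewrite low // Ua.
- by rewrite low // Ua.
rewrite /=; case: (ltnP s.+4 N) => Hs; first exact: Walo.
have Es : s = m.+2 by lia.
subst s.
case: (eqVneq a m.+2) => [Ea|Na].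
  subst a; have H := Ha m.+4 2 m.+4.+1 ltac:(lia) isT ltac:(lia); simpH H.
  rewrite (Walo m.+1 m.+1) // in H; solve1 H.
have H := Ha a.+3 1 m.+4.+1 Hi isT ltac:(lia); simpH H.
apply: (@cancel_nat a.+1 m.+3); first by apply/eqP => E; move/eqP: Na; lia.
solve1 H.
Qed.

Ltac crush := rewrite /LB /BR /bvf /dco /Dco /=;
  repeat (rewrite ?eqxx ?eqSS ?eqS0 ?eq0S ?eqSn ?eqnS /=; case: eqP => [?|?]; subst; try (exfalso; lia));
  rewrite /=; ring.

Lemma back_der a1 a2 a3 : DerS (dco a1 a2 a3).
Proof.
move=> i j t Hi Hj Ht.
case: j Hj => [|[|[|c]]] Hj; case: i Hi => [|[|[|a]]] Hi; case: t Ht => [|[|[|[|s]]]] Ht; crush.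
Qed.

Lemma back_anti a2 a3 b : AntiS (Dco a2 a3 b).
Proof.
move=> i j t Hi Hj Ht.
case: j Hj => [|[|[|c]]] Hj; case: i Hi => [|[|[|a]]] Hi; case: t Ht => [|[|[|[|s]]]] Ht; crush.
Qed.

Lemma back_th a1 a2 a3 b : ThS (dco a1 a2 a3) (Dco a2 a3 b).
Proof.
move=> i j t Hi Hj Ht.
case: j Hj => [|[|[|c]]] Hj; case: i Hi => [|[|[|a]]] Hi; case: t Ht => [|[|[|[|s]]]] Ht; crush.
Qed.

Lemma LB_ext (f g : nat -> nat -> C) i j t : (i < N)%N ->
  (forall i', (i' <= N)%N -> f i' t = g i' t) -> LB f i j t = LB g i j t.
Proof.
move=> Hi E; case: j => [|[|[|c]]] //=; case: i Hi => [|[|[|a]]] Hi //=.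
all: by rewrite E //; apply: ltnW.
Qed.

Lemma DerS_ext f g : (forall i t, (i <= N)%N -> (t < N)%N -> f i t = g i t) -> DerS g -> DerS f.
Proof.
move=> E H i j t Hi Hj Ht; rewrite (@LB_ext f g) //; last by move=> i' Hi'; rewrite E.
rewrite H //; congr (_ + _); apply: (@BR_ext R m) => // s Hs; rewrite E //; exact: ltnW.
Qed.

Lemma AntiS_ext f g : (forall i t, (i <= N)%N -> (t < N)%N -> f i t = g i t) -> AntiS g -> AntiS f.
Proof.
move=> E H i j t Hi Hj Ht; rewrite (@LB_ext f g) //; last by move=> i' Hi'; rewrite E.
rewrite H //; congr (_ - _); apply: (@BR_ext R m) => // s Hs; rewrite E //; exact: ltnW.
Qed.

Lemma ThS_ext f g f' g' : (forall i t, (i <= N)%N -> (t < N)%N -> f i t = f' i t) ->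
  (forall i t, (i <= N)%N -> (t < N)%N -> g i t = g' i t) -> ThS f' g' -> ThS f g.
Proof.
move=> E E' H i j t Hi Hj Ht.
rewrite (@BR_ext R m (bvf R i) (bvf R i) (f j) (f' j) t) //; last by move=> s Hs; rewrite E // ltnW.
rewrite [RHS](@BR_ext R m (bvf R i) (bvf R i) (g j) (g' j) t) //; last by move=> s Hs; rewrite E' // ltnW.
exact: H.
Qed.

Lemma forwardU' (U : nat -> nat -> C) : DerS U ->
  forall i t, (i < N)%N -> (t < N)%N -> U i t = dco (U 3%N 3%N - U 2%N 2%N) (- U 1%N 2%N) (U 2%N 2%N) i t.
Proof.
move=> Hd; have [U0 U1 U2 Ua] := forwardU Hd.
move=> i t Hi Ht; case: i Hi => [|[|[|a]]] Hi.
- by rewrite U0.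
- case: (eqVneq t 2) => [->|Nt]; first by rewrite /= opprK.
  rewrite U1 //; case: t Ht Nt => [|[|[|s]]] //.
- case: (eqVneq t 2) => [->|Nt]; first by [].
  rewrite U2 //; case: t Ht Nt => [|[|[|s]]] //.
- exact: Ua.
Qed.

End S2.



Ltac crushv := rewrite /bvf /dco /Dco /=;
  repeat (rewrite ?eqxx ?eqSS ?eqS0 ?eq0S ?eqSn ?eqnS ?ltnS ?leq0n /=; case: eqP => [?|?]; subst; try (exfalso; lia));
  rewrite ?eqxx ?eqSS ?eqS0 ?eq0S ?eqSn ?eqnS ?ltnS ?leq0n /=; ring.

Section S3.
Variable R : realType.
Variable m : nat.
Local Notation C := R[i].
Local Notation N := m.+4.+2.
Local Notation ee := (e R m.+4).

Lemma cf_e k t : (0 < k)%N -> (t < N)%N -> cf (ee k) t = bvf R k.+1 t.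
Proof. by move=> Hk Ht; rewrite e_bvec // cf_bvec. Qed.

Lemma cf_sumE p (f : nat -> C) t : (0 < p)%N -> (t < N)%N ->
  cf (\sum_(p <= k < m.+4.+1) f k *: ee k) t = if (p < t)%N then f t.-1 else 0.
Proof.
move=> Hp Ht; rewrite cf_sum.
rewrite (eq_big_nat _ _ (F2 := fun k => f k * bvf R k.+1 t)); last first.
  move=> k /andP[Hk _]; rewrite cfZ cf_e //; exact: leq_trans Hk.
rewrite (collapse (p := t.-1)) => [|k _ Hk]; last first.
  rewrite /bvf; case: eqP => [E|]; last by rewrite mulr0.
  by move: Hk; rewrite E /= eqxx.
case: t Ht => [|t] Ht /=.
  by rewrite (_ : (p <= 0)%N = false) //; lia.
rewrite /bvf eqxx mulr1 !ltnS (_ : (t <= m.+4)%N) ?andbT //; lia.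
Qed.

End S3.

Theorem mainTheorem11 (R : realType) (n : nat) (hn : (4 <= n)%N)
    (d D : 'M[R[i]]_(n.+2)) :
  is_biderivation d D <->
  exists (a1 a2 a3 : R[i]) (b : nat -> R[i]),
    app d (h1 R n) = 0 /\
        app d (h2 R n) = - (a2 *: e R n 1) /\
        app d (e R n 1) = a3 *: e R n 1 /\
        (forall k : nat, (2 <= k <= n)%N ->
           app d (e R n k) = (a1 + (k.-1)%:R * a3) *: e R n k + a2 *: e R n k.+1) /\
        app D (h1 R n) = (\sum_(2 <= k < n.+1) b k.+1 *: e R n k) /\
        app D (h2 R n) = - (a2 *: e R n 1) + (\sum_(2 <= k < n.+1) ((k.-1)%:R * b k.+1) *: e R n k) /\
        app D (e R n 1) = a3 *: e R n 1 + (\sum_(3 <= k < n.+1) b k *: e R n k) /\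
      (forall k : nat, (2 <= k <= n)%N -> app D (e R n k) = 0).
Proof.
case: n hn d D => [|[|[|[|m]]]] // _ d D.
rewrite /is_biderivation /h1 /h2; split.
- case=> /derP Hd /antiP Ha /thP Ht.
  have FU := forwardU' Hd; have FW := forwardW Hd Ha Ht.
  exists (Uf d 3%N 3%N - Uf d 2%N 2%N), (- Uf d 1%N 2%N), (Uf d 2%N 2%N), (Uf D 0%N).
  split; [|split;[|split;[|split;[|split;[|split;[|split]]]]]].
  + apply: cf_eq => t Ht'; rewrite cf0; exact: (FU 0%N t isT Ht').
  + apply: cf_eq => t Ht'; rewrite cfN cfZ cf_e //.
    move: (FU 1%N t isT Ht'); rewrite /Uf => ->; case: t Ht' => [|[|[|s]]] Ht'; crushv.
  + apply: cf_eq => t Ht'; rewrite [in LHS](@e_bvec R m 1) // cfZ cf_e //.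
    move: (FU 2%N t isT Ht'); rewrite /Uf => ->; case: t Ht' => [|[|[|s]]] Ht'; crushv.
  + move=> k Hk; apply: cf_eq => t Ht'; rewrite [in LHS](@e_bvec R m k); last by lia.
    rewrite cfD !cfZ !cf_e //; try lia.
    move: (FU k.+1 t ltac:(lia) Ht'); rewrite /Uf => ->.
    case: k Hk => [|[|a]] // Hk; crushv.
  + apply: cf_eq => t Ht'; rewrite cf_sumE //; move: (FW 0%N t isT Ht'); rewrite /Uf => ->.
    case: t Ht' => [|[|[|s]]] Ht'; crushv.
  + apply: cf_eq => t Ht'; rewrite cfD cfN cfZ cf_e // cf_sumE //; move: (FW 1%N t isT Ht'); rewrite /Uf => ->.
    case: t Ht' => [|[|[|s]]] Ht'; crushv.
  + apply: cf_eq => t Ht'; rewrite [in LHS](@e_bvec R m 1) // cfD cfZ cf_e // cf_sumE //; move: (FW 2%N t isT Ht'); rewrite /Uf => ->.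
    case: t Ht' => [|[|[|[|s]]]] Ht'; crushv.
  + move=> k Hk; apply: cf_eq => t Ht'; rewrite [in LHS](@e_bvec R m k); last by lia.
    rewrite cf0; move: (FW k.+1 t ltac:(lia) Ht'); rewrite /Uf => ->.
    by case: k Hk => [|[|a]].
case=> a1 [a2 [a3 [b [H1 [H2 [H3 [H4 [H5 [H6 [H7 H8]]]]]]]]]].
have EU : forall i t, (i <= m.+4.+2)%N -> (t < m.+4.+2)%N -> Uf d i t = dco a1 a2 a3 i t.
  move=> i t Hi Ht; case: (ltnP i m.+4.+2) => HiN; last first.
    have -> : i = m.+4.+2 by lia.
    rewrite /Uf bvec_out // app0 cf0 /=.
    case: eqP => [?|_]; first lia.
    by case: eqP => [?|_]; first lia.
  case: i Hi HiN => [|[|[|a]]] _ HiN.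
  - by rewrite /Uf H1 cf0.
  - rewrite /Uf H2 cfN cfZ cf_e //; case: t Ht => [|[|[|s]]] Ht; crushv.
  - rewrite /Uf -(@e_bvec R m 1) // H3 cfZ cf_e //; case: t Ht => [|[|[|s]]] Ht; crushv.
  - rewrite /Uf -(@e_bvec R m a.+2) // H4; last by lia.
    rewrite cfD !cfZ !cf_e //; crushv.
have EW : forall i t, (i <= m.+4.+2)%N -> (t < m.+4.+2)%N -> Uf D i t = Dco a2 a3 b i t.
  move=> i t Hi Ht; case: (ltnP i m.+4.+2) => HiN; last first.
    have -> : i = m.+4.+2 by lia.
    by rewrite /Uf bvec_out // app0 cf0 /=.
  case: i Hi HiN => [|[|[|a]]] _ HiN.
  - rewrite /Uf H5 cf_sumE //; case: t Ht => [|[|[|s]]] Ht; crushv.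
  - rewrite /Uf H6 cfD cfN cfZ cf_e // cf_sumE //; case: t Ht => [|[|[|s]]] Ht; crushv.
  - rewrite /Uf -(@e_bvec R m 1) // H7 cfD cfZ cf_e // cf_sumE //.
    case: t Ht => [|[|[|[|s]]]] Ht; crushv.
  - rewrite /Uf -(@e_bvec R m a.+2) // H8; last by lia.
    by rewrite cf0.
split.
- apply/derP; apply: (DerS_ext EU); exact: back_der.
- apply/antiP; apply: (AntiS_ext EW); exact: back_anti.
- apply/thP; apply: (ThS_ext EU EW); exact: back_th.
Qed.
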